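(* Let $(X_i)_{i\ge1}$ be a sequence in $\mathcal{H}_{\mbox{s-conv}}(S^n)$ converging in the Pompeiu-Hausdorff metric to $X\in\mathcal{H}(S^n)$. Then $X=X^{\circ\circ}$.
   Context: $S^n$ is the unit sphere in $\mathbb{R}^{n+1}$, $n\ge1$; $|PQ|=\arccos(P\cdot Q)$. $H(P)=\{Q\in S^n:P\cdot Q\ge0\}$ and $W^\circ=\bigcap_{P\in W}H(P)$, $W^{\circ\circ}=(W^\circ)^\circ$. $\mathcal{H}(S^n)$ is the set of non-empty closed subsets of $S^n$ with the Pompeiu-Hausdorff metric $h(A,B)=\max\{\max_{x\in A}\min_{y\in B}|xy|,\ \max_{y\in B}\min_{x\in A}|xy|\}$. A subset is hemispherical if it is disjoint from $H(P)$ for some $P\in S^n$. For $P,Q$ in a hemispherical set, the arc $PQ=\{((1-t)P+tQ)/\|(1-t)P+tQ\|:0\le t\le1\}$; a hemispherical set $W$ is spherical convex if $PQ\subset W$ for all $P,Q\in W$. $\mathcal{H}_{\mbox{s-conv}}(S^n)$ is the set of non-empty closed spherical convex subsets of $S^n$. *)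

(* Defs.v *)
From Stdlib Require Import Reals Lra Lia.
Open Scope R_scope.

(* Points of R^{n+1} are represented as functions nat -> R;
   only coordinates 0..n matter, and points of S^n are required to vanish
   beyond index n (so each point of S^n has a unique representative). *)
Definition vec := nat -> R.

Definition dot (n : nat) (P Q : vec) : R := sum_f_R0 (fun i => P i * Q i) n.

Definition vnorm (n : nat) (P : vec) : R := sqrt (dot n P P).

Definition sphere (n : nat) (P : vec) : Prop :=
  (forall i : nat, (n < i)%nat -> P i = 0) /\ dot n P P = 1.

Definition sdist (n : nat) (P Q : vec) : R := acos (dot n P Q).

Definition vset := vec -> Prop.

Definition subset_sphere (n : nat) (W : vset) : Prop :=
  forall P, W P -> sphere n P.

Definition hemi (n : nat) (P : vec) : vset :=
  fun Q => sphere n Q /\ dot n P Q >= 0.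

(* W° = intersection over P in W of H(P) (= S^n if W is empty). *)
Definition polar (n : nat) (W : vset) : vset :=
  fun Q => sphere n Q /\ forall P, W P -> hemi n P Q.

Definition closed_in_sphere (n : nat) (A : vset) : Prop :=
  subset_sphere n A /\
  forall (x : nat -> vec) (y : vec),
    (forall k, A (x k)) -> sphere n y ->
    (forall eps, eps > 0 -> exists N, forall k, (k >= N)%nat -> sdist n (x k) y < eps) ->
    A y.

Definition in_HS (n : nat) (A : vset) : Prop :=
  (exists P, A P) /\ closed_in_sphere n A.

Definition hemispherical (n : nat) (W : vset) : Prop :=
  exists P, sphere n P /\ forall Q, W Q -> ~ hemi n P Q.

Definition arc (n : nat) (P Q : vec) : vset :=
  fun R0 => exists t, 0 <= t <= 1 /\
    R0 = (fun i => ((1 - t) * P i + t * Q i) /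
                   vnorm n (fun j => (1 - t) * P j + t * Q j)).

Definition spherical_convex (n : nat) (W : vset) : Prop :=
  subset_sphere n W /\ hemispherical n W /\
  forall P Q, W P -> W Q -> forall R0, arc n P Q R0 -> W R0.

Definition in_Hsconv (n : nat) (A : vset) : Prop :=
  in_HS n A /\ spherical_convex n A.

(* h(A,B) <= eps, for non-empty closed (hence compact) subsets of S^n,
   where the max/min in the definition of h are attained. *)
Definition hausdorff_le (n : nat) (A B : vset) (eps : R) : Prop :=
  (forall x, A x -> exists y, B y /\ sdist n x y <= eps) /\
  (forall y, B y -> exists x, A x /\ sdist n x y <= eps).

Definition hausdorff_converges (n : nat) (Xs : nat -> vset) (X : vset) : Prop :=
  forall eps, eps > 0 -> exists N, forall i, (i >= N)%nat -> hausdorff_le n (Xs i) X eps.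

(* Main.v *)
Require Import Defs.
From Stdlib Require Import Reals Lra Lia ClassicalEpsilon Classical.
Open Scope R_scope.
Lemma sqnn (a : R) : 0 <= a * a. Proof. pose proof (Rle_0_sqr a). unfold Rsqr in H. lra. Qed.

Definition E1 (n : nat) (x y : vec) : R := sum_f_R0 (fun j => Rabs (x j - y j)) n.

Lemma dot_sym n P Q : dot n P Q = dot n Q P.
Proof. unfold dot; induction n; simpl; [ring| rewrite IHn; ring]. Qed.

Lemma sum_nonneg (f : nat -> R) n : (forall j, (j <= n)%nat -> 0 <= f j) -> 0 <= sum_f_R0 f n.
Proof. induction n; intros H; simpl. apply H; lia.
 assert (0 <= f (S n)) by (apply H; lia). assert (0 <= sum_f_R0 f n) by (apply IHn; intros; apply H; lia). lra. Qed.

Lemma term_le_sum (f : nat -> R) n j : (forall k, (k <= n)%nat -> 0 <= f k) -> (j <= n)%nat -> f j <= sum_f_R0 f n.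
Proof. induction n; intros H Hj; simpl.
 - replace j with 0%nat by lia; lra.
 - destruct (Nat.eq_dec j (S n)) as [->|Hne].
   + assert (0 <= sum_f_R0 f n) by (apply sum_nonneg; intros; apply H; lia). lra.
   + assert (f j <= sum_f_R0 f n) by (apply IHn; [intros; apply H; lia| lia]).
     assert (0 <= f (S n)) by (apply H; lia). lra. Qed.

Lemma sum_abs_le (f : nat -> R) n : Rabs (sum_f_R0 f n) <= sum_f_R0 (fun j => Rabs (f j)) n.
Proof. induction n; simpl. lra. eapply Rle_trans. apply Rabs_triang. lra. Qed.

Lemma dist_sq n x y : sum_f_R0 (fun j => (x j - y j) * (x j - y j)) n = dot n x x - 2 * dot n x y + dot n y y.
Proof. unfold dot; induction n; simpl; [ring| rewrite IHn; ring]. Qed.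
Lemma dist_sq' n x y : sum_f_R0 (fun j => (x j + y j) * (x j + y j)) n = dot n x x + 2 * dot n x y + dot n y y.
Proof. unfold dot; induction n; simpl; [ring| rewrite IHn; ring]. Qed.

Lemma sphere_coord n x j : sphere n x -> Rabs (x j) <= 1.
Proof. intros [Hz Hd]. destruct (Compare_dec.le_lt_dec j n) as [Hj|Hj].
 - assert (x j * x j <= 1). { rewrite <- Hd. unfold dot. apply (term_le_sum (fun i => x i * x i)); auto.
     intros; apply sqnn. }
   apply Rabs_le; nra.
 - rewrite Hz by lia. rewrite Rabs_R0; lra. Qed.

Lemma dot_bound n x y : sphere n x -> sphere n y -> -1 <= dot n x y <= 1.
Proof. intros Hx Hy. pose proof (dist_sq n x y). pose proof (dist_sq' n x y).
 assert (0 <= sum_f_R0 (fun j => (x j - y j) * (x j - y j)) n) by (apply sum_nonneg; intros; cbv beta; apply sqnn).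
 assert (0 <= sum_f_R0 (fun j => (x j + y j) * (x j + y j)) n) by (apply sum_nonneg; intros; cbv beta; apply sqnn).
 destruct Hx as [_ Hx], Hy as [_ Hy]. lra. Qed.

Lemma dot_cont n a b a' b' : (forall j, Rabs (a j) <= 1) -> (forall j, Rabs (b' j) <= 1) ->
  Rabs (dot n a b - dot n a' b') <= E1 n b b' + E1 n a a'.
Proof. intros Ha Hb. unfold dot, E1.
 assert (forall j, Rabs (a j * b j - a' j * b' j) <= Rabs (b j - b' j) + Rabs (a j - a' j)).
 { intro j. replace (a j * b j - a' j * b' j) with (a j * (b j - b' j) + (a j - a' j) * b' j) by ring.
   eapply Rle_trans. apply Rabs_triang. rewrite !Rabs_mult.
   specialize (Ha j); specialize (Hb j). pose proof (Rabs_pos (b j - b' j)). pose proof (Rabs_pos (a j - a' j)). nra. }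
 induction n; simpl. apply H.
 replace (sum_f_R0 (fun i : nat => a i * b i) n + a (S n) * b (S n) -
   (sum_f_R0 (fun i : nat => a' i * b' i) n + a' (S n) * b' (S n))) with
   ((sum_f_R0 (fun i : nat => a i * b i) n - sum_f_R0 (fun i : nat => a' i * b' i) n) + (a (S n) * b (S n) - a' (S n) * b' (S n))) by ring.
 eapply Rle_trans. apply Rabs_triang. specialize (H (S n)). lra. Qed.

Lemma E1_tri n x y z : E1 n x z <= E1 n x y + E1 n y z.
Proof. unfold E1. induction n; simpl.
 - replace (x 0%nat - z 0%nat) with ((x 0%nat - y 0%nat) + (y 0%nat - z 0%nat)) by ring. apply Rabs_triang.
 - assert (Rabs (x (S n) - z (S n)) <= Rabs (x (S n) - y (S n)) + Rabs (y (S n) - z (S n))).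
   { replace (x (S n) - z (S n)) with ((x (S n) - y (S n)) + (y (S n) - z (S n))) by ring. apply Rabs_triang. }
   lra. Qed.

Lemma E1_sym n x y : E1 n x y = E1 n y x.
Proof. unfold E1; induction n; simpl; [|rewrite IHn]; rewrite ?(Rabs_minus_sym (x _)); reflexivity. Qed.

Lemma D1 n x y e : sphere n x -> sphere n y -> sdist n x y <= e -> 0 <= e <= PI -> cos e <= dot n x y.
Proof. intros Hx Hy Hs He. pose proof (dot_bound n x y Hx Hy). unfold sdist in Hs.
 pose proof (acos_bound (dot n x y)). rewrite <- (cos_acos (dot n x y)) by lra.
 destruct (Req_dec (acos (dot n x y)) e) as [E|E]. rewrite E; lra.
 left. apply cos_decreasing_1; lra. Qed.

Lemma D2 n x y e : sphere n x -> sphere n y -> cos e < dot n x y -> 0 < e <= PI -> sdist n x y < e.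
Proof. intros Hx Hy Hc He. pose proof (dot_bound n x y Hx Hy). unfold sdist.
 pose proof (acos_bound (dot n x y)). rewrite <- (cos_acos (dot n x y)) in Hc by lra.
 destruct (Rlt_le_dec (acos (dot n x y)) e) as [L|L]; auto.
 destruct (Req_dec (acos (dot n x y)) e) as [E|E]. rewrite E in Hc; lra.
 assert (cos (acos (dot n x y)) < cos e) by (apply cos_decreasing_1; lra). lra. Qed.

Lemma cos_lt_1 e : 0 < e <= PI -> cos e < 1.
Proof. intros. rewrite <- cos_0. apply cos_decreasing_1; lra. Qed.

Lemma D3 th : 0 < th -> exists e, 0 < e <= 1 /\ 1 - cos e < th.
Proof. intros Hth. exists (Rmin 1 th). pose proof PI2_1.
 assert (Hm : 0 < Rmin 1 th <= 1 /\ Rmin 1 th <= th) by (unfold Rmin; destruct Rle_dec; lra).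
 split; [lra|]. set (e := Rmin 1 th) in *.
 replace e with (2 * (e/2)) by field. rewrite cos_2a_sin.
 pose proof (sin_lt_x (e/2) ltac:(lra)). pose proof (sin_ge_0 (e/2) ltac:(lra) ltac:(lra)).
 assert (sin (e/2) * sin (e/2) <= (e/2)*(e/2)) by nra. nra. Qed.

Lemma E1_le_dot n x y : sphere n x -> sphere n y -> 1 - dot n x y <= E1 n x y.
Proof. intros Hx Hy. pose proof (dist_sq n x y).
 assert (sum_f_R0 (fun j => (x j - y j) * (x j - y j)) n <= sum_f_R0 (fun j => 2 * Rabs (x j - y j)) n).
 { apply sum_Rle. intros j _. pose proof (sphere_coord n x j Hx). pose proof (sphere_coord n y j Hy).
   assert (Rabs (x j - y j) <= 2). { unfold Rminus. eapply Rle_trans. apply Rabs_triang. rewrite Rabs_Ropp. lra. }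
   pose proof (Rabs_pos (x j - y j)).
   assert (E: (x j - y j) * (x j - y j) = Rabs (x j - y j) * Rabs (x j - y j)) by (pose proof (Rsqr_abs (x j - y j)); unfold Rsqr in *; lra).
   rewrite E. nra. }
 assert (sum_f_R0 (fun j => 2 * Rabs (x j - y j)) n = 2 * E1 n x y) by (unfold E1; clear; induction n; simpl; [|rewrite IHn]; ring). destruct Hx as [_ Hx], Hy as [_ Hy]. lra. Qed.

Lemma close_E1 n eta : 0 < eta -> exists e, 0 < e <= 1 /\
  forall x y, sphere n x -> sphere n y -> sdist n x y <= e -> E1 n x y < eta.
Proof. intros Heta. pose proof (pos_INR n) as Hn.
 assert (HS : 0 < INR (S n)) by (rewrite S_INR; lra).
 set (d := eta / (2 * INR (S n))).
 assert (Hd : 0 < d) by (unfold d; apply Rdiv_lt_0_compat; lra).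
 destruct (D3 (d * d / 2)) as [e [He Hc]]. nra.
 exists e. split; auto. intros x y Hx Hy Hs. pose proof PI2_1.
 pose proof (D1 n x y e Hx Hy Hs ltac:(lra)). pose proof (dist_sq n x y).
 destruct Hx as [Hx0 Hx1], Hy as [Hy0 Hy1].
 assert (forall j, (j <= n)%nat -> Rabs (x j - y j) <= d).
 { intros j Hj. assert ((x j - y j) * (x j - y j) <= sum_f_R0 (fun j => (x j - y j) * (x j - y j)) n).
   { apply (term_le_sum (fun j => (x j - y j) * (x j - y j))); auto. intros; apply sqnn. }
   assert (E: (x j - y j) * (x j - y j) = Rabs (x j - y j) * Rabs (x j - y j)) by (pose proof (Rsqr_abs (x j - y j)); unfold Rsqr in *; lra).
   pose proof (Rabs_pos (x j - y j)). nra. }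
 assert (E1 n x y <= sum_f_R0 (fun _ => d) n) by (unfold E1; apply sum_Rle; auto).
 rewrite sum_cte in H3. unfold d in H3. field_simplify in H3; lra. Qed.

Lemma closed_E1 n (A : vset) y : closed_in_sphere n A -> sphere n y ->
  (forall eta, 0 < eta -> exists z, A z /\ E1 n z y < eta) -> A y.
Proof. intros [Hsub Hcl] Hy H.
 assert (F : forall k : nat, {z | A z /\ E1 n z y < / (INR k + 1)}).
 { intro k. apply constructive_indefinite_description. apply H. pose proof (pos_INR k).
   apply Rinv_0_lt_compat; lra. }
 apply (Hcl (fun k => proj1_sig (F k))); auto.
 - intro k. destruct (F k); simpl; tauto.
 - intros eps Heps. set (e := Rmin eps 1). pose proof PI2_1.
   assert (He : 0 < e <= 1 /\ e <= eps) by (unfold e, Rmin; destruct Rle_dec; lra).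
   pose proof (cos_lt_1 e ltac:(lra)).
   destruct (archimed_cor1 (1 - cos e)) as [N [HN HN0]]; [lra|].
   exists N. intros k Hk. destruct (F k) as [z [Hz Hzy]]; simpl.
   assert (/ (INR k + 1) <= / INR N).
   { apply Rinv_le_contravar. apply lt_0_INR; lia. apply le_INR in Hk. lra. }
   pose proof (E1_le_dot n z y (Hsub z Hz) Hy).
   assert (sdist n z y < e) by (apply D2; auto; lra). lra. Qed.

Lemma Rabs_le_inv a b : Rabs a <= b -> -b <= a <= b.
Proof. intros H. pose proof (Rle_abs a). pose proof (Rle_abs (-a)). rewrite Rabs_Ropp in H1. lra. Qed.

Definition conv (a : nat -> R) (l : R) := forall eps, 0 < eps -> exists N, forall k, (N <= k)%nat -> Rabs (a k - l) < eps.

Lemma conv_sub a l psi : conv a l -> (forall k, (k <= psi k)%nat) -> conv (fun k => a (psi k)) l.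
Proof. intros H Hp eps He. destruct (H eps He) as [N HN]. exists N. intros k Hk. apply HN. specialize (Hp k). lia. Qed.

Lemma conv_bound a l : conv a l -> (forall k, Rabs (a k) <= 1) -> Rabs l <= 1.
Proof. intros H Hb. destruct (Rle_dec (Rabs l) 1) as [L|L]; auto. exfalso.
 destruct (H (Rabs l - 1)) as [N HN]. lra. specialize (HN N (le_n N)). specialize (Hb N).
 pose proof (Rabs_triang_inv l (a N)). rewrite Rabs_minus_sym in HN. lra. Qed.

Lemma scalar_BW (u : nat -> R) : (forall k, Rabs (u k) <= 1) ->
  exists psi : nat -> nat, (forall k, (k <= psi k)%nat) /\ exists l, conv (fun k => u (psi k)) l.
Proof. intros Hu. destruct (Bolzano_Weierstrass u (fun c => -1 <= c <= 1) (compact_P3 (-1) 1)) as [l Hl].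
 { intro k. specialize (Hu k). apply Rabs_le_inv in Hu. lra. }
 assert (F : forall k : nat, {p : nat | (k <= p)%nat /\ Rabs (u p - l) < / (INR k + 1)}).
 { intro k. apply constructive_indefinite_description.
   assert (Hpos : 0 < / (INR k + 1)) by (pose proof (pos_INR k); apply Rinv_0_lt_compat; lra).
   destruct (Hl (disc l (mkposreal _ Hpos)) k) as [p [Hp1 Hp2]].
   - exists (mkposreal _ Hpos). intros y Hy; exact Hy.
   - exists p. split; auto. }
 exists (fun k => proj1_sig (F k)). split.
 - intro k. destruct (F k); simpl; tauto.
 - exists l. intros eps Heps. destruct (archimed_cor1 eps Heps) as [N [HN HN0]]. exists N. intros k Hk.
   destruct (F k) as [p [Hp1 Hp2]]; simpl.
   assert (/ (INR k + 1) <= / INR N).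
   { apply Rinv_le_contravar. apply lt_0_INR; lia. apply le_INR in Hk. lra. }
   lra. Qed.

Lemma multi_BW (n : nat) (xs : nat -> vec) : (forall k j, Rabs (xs k j) <= 1) ->
  forall m, exists phi : nat -> nat, (forall k, (k <= phi k)%nat) /\
    exists l : nat -> R, forall j, (j < m)%nat -> conv (fun k => xs (phi k) j) (l j).
Proof. intros Hb m. induction m as [|m IH].
 - exists (fun k => k). split; [auto|]. exists (fun _ => 0). intros; lia.
 - destruct IH as [phi [Hphi [l Hl]]].
   destruct (scalar_BW (fun k => xs (phi k) m)) as [psi [Hpsi [lm Hlm]]]. intro; apply Hb.
   exists (fun k => phi (psi k)). split.
   + intro k. specialize (Hpsi k). specialize (Hphi (psi k)). lia.
   + exists (fun j => if Nat.eq_dec j m then lm else l j). intros j Hj.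
     destruct (Nat.eq_dec j m) as [->|Hne].
     * exact Hlm.
     * apply (conv_sub (fun k => xs (phi k) j)); auto. apply Hl. lia. Qed.

Lemma sum_conv0 (g : nat -> nat -> R) n : (forall j, (j <= n)%nat -> conv (fun k => g k j) 0) ->
  forall eps, 0 < eps -> exists N, forall k, (N <= k)%nat -> sum_f_R0 (fun j => Rabs (g k j)) n < eps.
Proof. induction n; intros H eps Heps; simpl.
 - destruct (H 0%nat (le_n _) eps Heps) as [N HN]. exists N. intros k Hk. specialize (HN k Hk). rewrite Rminus_0_r in HN. auto.
 - destruct (IHn (fun j Hj => H j ltac:(lia)) (eps/2)) as [N1 HN1]. lra.
   destruct (H (S n) (le_n _) (eps/2)) as [N2 HN2]. lra.
   exists (Nat.max N1 N2). intros k Hk. specialize (HN1 k ltac:(lia)). specialize (HN2 k ltac:(lia)).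
   rewrite Rminus_0_r in HN2. lra. Qed.

Lemma E1_self n x : E1 n x x = 0.
Proof. unfold E1; induction n; simpl; [|rewrite IHn]; rewrite Rminus_diag, Rabs_R0; ring. Qed.

Lemma max_exists n (X : vset) Q : in_HS n X -> sphere n Q ->
  exists x0, X x0 /\ forall x, X x -> dot n Q x <= dot n Q x0.
Proof. intros [[p Hp] [Hsub Hcl]] HQ.
 set (E := fun r => exists x, X x /\ r = dot n Q x).
 destruct (completeness E) as [s [Hub Hlub]].
 { exists 1. intros r [x [Hx ->]]. pose proof (dot_bound n Q x HQ (Hsub x Hx)). lra. }
 { exists (dot n Q p). exists p; auto. }
 assert (F : forall k : nat, {x | X x /\ s - / (INR k + 1) < dot n Q x}).
 { intro k. apply constructive_indefinite_description.
   assert (Hpos : 0 < / (INR k + 1)) by (pose proof (pos_INR k); apply Rinv_0_lt_compat; lra).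
   apply NNPP. intro Hn. assert (is_upper_bound E (s - / (INR k + 1))).
   { intros r [x [Hx ->]]. destruct (Rle_dec (dot n Q x) (s - / (INR k + 1))) as [L|L]; auto.
     exfalso; apply Hn. exists x. split; auto; lra. }
   specialize (Hlub _ H). lra. }
 set (xs := fun k => proj1_sig (F k)).
 assert (HxsX : forall k, X (xs k)) by (intro k; unfold xs; destruct (F k); simpl; tauto).
 assert (Hxsv : forall k, s - / (INR k + 1) < dot n Q (xs k)) by (intro k; unfold xs; destruct (F k); simpl; tauto).
 assert (Hxsb : forall k j, Rabs (xs k j) <= 1) by (intros; apply (sphere_coord n); apply Hsub; auto).
 destruct (multi_BW n xs Hxsb (S n)) as [phi [Hphi [l Hl]]].
 set (y := fun j => if Nat.leb j n then l j else 0).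
 assert (Hyb : forall j, Rabs (y j) <= 1).
 { intro j. unfold y. destruct (Nat.leb j n) eqn:E'.
   - apply (conv_bound (fun k => xs (phi k) j)). apply Hl. apply Nat.leb_le in E'. lia. intro; apply Hxsb.
   - rewrite Rabs_R0; lra. }
 assert (Hconv : forall eps, 0 < eps -> exists N, forall k, (N <= k)%nat -> E1 n (xs (phi k)) y < eps).
 { apply (sum_conv0 (fun k j => xs (phi k) j - y j)). intros j Hj eps Heps.
   destruct (Hl j ltac:(lia) eps Heps) as [N HN]. exists N. intros k Hk.
   unfold y. replace (Nat.leb j n) with true by (symmetry; apply Nat.leb_le; lia). rewrite Rminus_0_r. auto. }
 assert (Hy : sphere n y).
 { split. - intros i Hi. unfold y. replace (Nat.leb i n) with false by (symmetry; apply Nat.leb_gt; lia). reflexivity.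
   - destruct (Req_dec (dot n y y) 1) as [E'|E']; auto. exfalso.
     set (d := Rabs (dot n y y - 1)). assert (Hd : 0 < d) by (unfold d; apply Rabs_pos_lt; lra).
     destruct (Hconv (d/2)) as [N HN]. lra. specialize (HN N (le_n _)).
     pose proof (dot_cont n y y (xs (phi N)) (xs (phi N)) Hyb (Hxsb _)).
     destruct (Hsub _ (HxsX (phi N))) as [_ H1]. rewrite H1 in H. rewrite E1_sym in HN. unfold d in *. lra. }
 assert (HyX : X y).
 { apply (closed_E1 n X y (conj Hsub Hcl) Hy). intros eta Heta. destruct (Hconv eta Heta) as [N HN].
   exists (xs (phi N)). split; auto. }
 exists y. split; auto. intros x Hx.
 assert (Hsx : dot n Q x <= s) by (apply Hub; exists x; auto).
 destruct (Rle_dec s (dot n Q y)) as [L|L]; [lra|]. exfalso.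
 set (d := s - dot n Q y).
 destruct (Hconv (d/2)) as [N1 HN1]. unfold d; lra.
 destruct (archimed_cor1 (d/2)) as [N2 [HN2 HN20]]. unfold d; lra.
 set (k := Nat.max N1 N2). specialize (HN1 k ltac:(unfold k; lia)).
 specialize (Hxsv (phi k)). specialize (Hphi k).
 assert (/ (INR (phi k) + 1) <= / INR N2).
 { apply Rinv_le_contravar. apply lt_0_INR; lia. assert (N2 <= phi k)%nat by (unfold k in *; lia). apply le_INR in H. lra. }
 pose proof (dot_cont n Q y Q (xs (phi k)) (fun j => sphere_coord n Q j HQ) (Hxsb _)).
 rewrite E1_self in H0. rewrite E1_sym in HN1. apply Rabs_le_inv in H0. unfold d in *. lra. Qed.

Lemma var_ineq c a b : 0 < c <= 1 -> -1 <= a <= 1 -> -1 <= b <= 1 ->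
  (forall t, 0 < t <= 1/3 -> 0 < (1-t)*c + t*a ->
     ((1-t)*c + t*a) * ((1-t)*c + t*a) <= c*c*((1-t)*(1-t) + t*t + 2*t*(1-t)*b)) ->
  a <= c * b.
Proof. intros Hc Ha Hb H. destruct (Rle_dec a (c*b)) as [L|L]; auto. exfalso.
 set (d := a - c*b). assert (Hd : 0 < d <= 2) by (unfold d; nra).
 set (t := Rmin (1/3) (c*d/4)).
 assert (Ht : 0 < t <= 1/3 /\ t <= c*d/4) by (unfold t, Rmin; destruct Rle_dec; split; try split; nra).
 assert (HL : 0 < (1-t)*c + t*a) by nra.
 specialize (H t (proj1 Ht) HL).
 assert (E : ((1-t)*c + t*a) * ((1-t)*c + t*a) - c*c*((1-t)*(1-t) + t*t + 2*t*(1-t)*b)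
            = t * (2*(1-t)*c*d + t*(a*a - c*c))) by (unfold d; ring).
 assert (0 < 2*(1-t)*c*d + t*(a*a - c*c)).
 { assert (a*a - c*c >= -1) by nra. assert (t*(a*a-c*c) >= -t) by nra. nra. }
 nra. Qed.

Lemma limit_ineq L c N : 0 < L -> 0 < c <= 1 -> 0 <= N <= 1 -> L <= 1 ->
  (forall eta, 0 < eta <= 1 -> eta < L/4 -> (L - eta)*(L - eta) <= (c+eta)*(c+eta)*(N+eta)) ->
  L*L <= c*c*N.
Proof. intros HL Hc HN HL1 H. destruct (Rle_dec (L*L) (c*c*N)) as [K|K]; auto. exfalso.
 set (d := L*L - c*c*N). assert (Hd: 0 < d) by (unfold d; lra).
 set (eta := Rmin (Rmin 1 (L/8)) (d/20)).
 assert (He : 0 < eta /\ eta <= 1 /\ eta <= L/8 /\ eta <= d/20) by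
   (unfold eta, Rmin; repeat destruct Rle_dec; lra).
 specialize (H eta ltac:(lra) ltac:(lra)).
 assert ((c+eta)*(c+eta) <= c*c + 3*eta) by nra.
 assert ((c+eta)*(c+eta)*(N+eta) <= (c*c + 3*eta)*(N+eta)) by nra.
 assert ((c*c + 3*eta)*(N+eta) <= c*c*N + 7*eta) by nra.
 assert ((L - eta)*(L-eta) >= L*L - 2*eta) by nra.
 unfold d in *. lra. Qed.

Lemma dot_div n A B c : dot n A (fun j => B j / c) = dot n A B / c.
Proof. unfold dot; induction n; simpl; [|rewrite IHn]; unfold Rdiv; ring. Qed.

Lemma dot_comb n A P Q t : dot n A (fun j => (1-t)*P j + t*Q j) = (1-t)*dot n A P + t*dot n A Q.
Proof. unfold dot; induction n; simpl; [|rewrite IHn]; ring. Qed.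

Lemma dot_ww n P Q t : dot n (fun j => (1-t)*P j + t*Q j) (fun j => (1-t)*P j + t*Q j)
  = (1-t)*(1-t)*dot n P P + 2*t*(1-t)*dot n P Q + t*t*dot n Q Q.
Proof. unfold dot; induction n; simpl; [|rewrite IHn]; ring. Qed.

Lemma approx n Xs X Q x0 x t eta :
  (forall i, (1 <= i)%nat -> in_Hsconv n (Xs i)) -> in_HS n X -> hausdorff_converges n Xs X ->
  sphere n Q -> X x0 -> (forall z, X z -> dot n Q z <= dot n Q x0) -> X x -> 0 < t <= 1/3 -> 0 < eta ->
  exists c' a' b', Rabs (c' - dot n Q x0) <= eta /\ Rabs (a' - dot n Q x) <= eta /\
   Rabs (b' - dot n x0 x) <= 2*eta /\ -1 <= b' <= 1 /\
   (1-t)*c' + t*a' <= (dot n Q x0 + eta) * sqrt ((1-t)*(1-t) + t*t + 2*t*(1-t)*b').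
Proof. intros HXs [_ [HXsub _]] Hconv HQ Hx0 Hmax Hx Ht Heta.
 destruct (close_E1 n eta Heta) as [e [He Hclose]].
 destruct (Hconv e ltac:(lra)) as [N HN].
 set (i := Nat.max N 1). destruct (HN i ltac:(unfold i; lia)) as [Hh1 Hh2].
 destruct (HXs i ltac:(unfold i; lia)) as [[_ [Hisub _]] [_ [_ Hiarc]]].
 destruct (Hh2 x0 Hx0) as [x0' [Hx0' Hd0]].
 destruct (Hh2 x Hx) as [x' [Hx' Hd1]].
 set (w := fun j => (1-t)*x0' j + t*x' j).
 set (u := fun j => w j / vnorm n w).
 assert (Hu : Xs i u).
 { apply (Hiarc x0' x' Hx0' Hx'). exists t. split; [lra|]. reflexivity. }
 destruct (Hh1 u Hu) as [z [Hz Hdz]].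
 pose proof (HXsub _ Hx0) as S0. pose proof (HXsub _ Hx) as S1.
 pose proof (Hisub _ Hx0') as S0'. pose proof (Hisub _ Hx') as S1'.
 pose proof (Hisub _ Hu) as Su. pose proof (HXsub _ Hz) as Sz.
 pose proof (Hclose _ _ S0' S0 Hd0) as E0. pose proof (Hclose _ _ S1' S1 Hd1) as E1'.
 pose proof (Hclose _ _ Su Sz Hdz) as Ez.
 assert (BQ : forall j, Rabs (Q j) <= 1) by (intro; apply (sphere_coord n); auto).
 exists (dot n Q x0'), (dot n Q x'), (dot n x0' x'). repeat split.
 - pose proof (dot_cont n Q x0' Q x0 BQ (fun j => sphere_coord n x0 j S0)). rewrite E1_self in H. lra.
 - pose proof (dot_cont n Q x' Q x BQ (fun j => sphere_coord n x j S1)). rewrite E1_self in H. lra.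
 - pose proof (dot_cont n x0' x' x0 x (fun j => sphere_coord n x0' j S0') (fun j => sphere_coord n x j S1)). lra.
 - apply (dot_bound n x0' x' S0' S1').
 - apply (dot_bound n x0' x' S0' S1').
 - pose proof (dot_bound n x0' x' S0' S1').
   set (N' := (1-t)*(1-t) + t*t + 2*t*(1-t)*dot n x0' x').
   assert (0 <= t*(1-t)*(dot n x0' x' + 1)) by (apply Rmult_le_pos; [apply Rmult_le_pos|]; lra).
   assert (HN' : 0 < N') by (unfold N'; nra).
   assert (Hww : dot n w w = N').
   { unfold w. rewrite dot_ww. destruct S0' as [_ ->], S1' as [_ ->]. unfold N'; ring. }
   assert (Hv : vnorm n w = sqrt N') by (unfold vnorm; rewrite Hww; reflexivity).
   assert (Hs : 0 < sqrt N') by (apply sqrt_lt_R0; auto).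
   assert (HQu : dot n Q u = ((1-t)*dot n Q x0' + t*dot n Q x') / sqrt N').
   { unfold u. rewrite dot_div, Hv. unfold w. rewrite dot_comb. reflexivity. }
   assert (K : dot n Q u <= dot n Q x0 + eta).
   { pose proof (dot_cont n Q u Q z BQ (fun j => sphere_coord n z j Sz)) as K. rewrite E1_self in K.
     pose proof (Hmax z Hz). apply Rabs_le_inv in K. lra. }
   rewrite HQu in K. apply (Rmult_le_compat_r (sqrt N')) in K; [|lra].
   unfold Rdiv in K. rewrite Rmult_assoc, Rinv_l, Rmult_1_r in K by lra. lra.
Qed.

Lemma variational n Xs X Q x0 x :
  (forall i, (1 <= i)%nat -> in_Hsconv n (Xs i)) -> in_HS n X -> hausdorff_converges n Xs X ->
  sphere n Q -> X x0 -> (forall z, X z -> dot n Q z <= dot n Q x0) -> 0 < dot n Q x0 -> X x ->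
  dot n Q x <= dot n Q x0 * dot n x0 x.
Proof. intros HXs HX Hconv HQ Hx0 Hmax Hc Hx.
 pose proof HX as [_ [HXsub _]].
 pose proof (dot_bound n Q x0 HQ (HXsub _ Hx0)). pose proof (dot_bound n Q x HQ (HXsub _ Hx)).
 pose proof (dot_bound n x0 x (HXsub _ Hx0) (HXsub _ Hx)).
 set (c := dot n Q x0) in *. set (a := dot n Q x) in *. set (b := dot n x0 x) in *.
 apply var_ineq; try lra. intros t Ht HL.
 assert (0 <= t*(1-t)*(b + 1)) by (apply Rmult_le_pos; [apply Rmult_le_pos|]; lra).
 assert (0 <= t*(1-t)*(1 - b)) by (apply Rmult_le_pos; [apply Rmult_le_pos|]; lra).
 apply limit_ineq; try lra.
 - split; nra.
 - nra.
 - intros eta He HeL.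
   destruct (approx n Xs X Q x0 x t eta HXs HX Hconv HQ Hx0 Hmax Hx Ht (proj1 He))
     as [c' [a' [b' [K1 [K2 [K3 [K4 K5]]]]]]].
   fold c a b in K1, K2, K3, K5.
   apply Rabs_le_inv in K1. apply Rabs_le_inv in K2. apply Rabs_le_inv in K3.
   set (N' := (1-t)*(1-t) + t*t + 2*t*(1-t)*b') in *.
   assert (0 <= t*(1-t)*(b' + 1)) by (apply Rmult_le_pos; [apply Rmult_le_pos|]; lra).
   assert (HN' : 0 <= N') by (unfold N'; nra).
   assert (M1 : (1-t)*(c'-c) >= -(1-t)*eta) by nra.
   assert (M2 : t*(a'-a) >= -t*eta) by nra.
   set (L := (1-t)*c + t*a) in *.
   set (L'' := (1-t)*c' + t*a') in *.
   assert (HL' : L'' >= L - eta) by (unfold L, L''; nra).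
   pose proof (sqrt_pos N'). pose proof (sqrt_sqrt N' HN').
   assert (Sq : L'' * L'' <= ((c+eta) * sqrt N') * ((c+eta) * sqrt N')).
   { apply Rmult_le_compat; lra. }
   assert (Sq2 : (L-eta)*(L-eta) <= L''*L'') by (apply Rmult_le_compat; lra).
   assert (M3 : t*(1-t) <= 1/4) by nra.
   assert (M4 : 2*t*(1-t)*(b'-b) <= 2*t*(1-t)*(2*eta)) by (apply Rmult_le_compat_l; nra).
   assert (HNN : N' <= ((1-t)*(1-t) + t*t + 2*t*(1-t)*b) + eta) by (unfold N'; nra).
   assert (M5 : (c+eta)*(c+eta)*N' <= (c+eta)*(c+eta)*(((1-t)*(1-t) + t*t + 2*t*(1-t)*b) + eta))
     by (apply Rmult_le_compat_l; nra).
   replace (((c+eta) * sqrt N') * ((c+eta) * sqrt N')) with ((c+eta)*(c+eta)*(sqrt N' * sqrt N')) in Sq by ring.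
   rewrite H6 in Sq. lra.
Qed.

Lemma dot_opp n A B : dot n A (fun j => - B j) = - dot n A B.
Proof. unfold dot; induction n; simpl; [|rewrite IHn]; ring. Qed.
Lemma dot_lin n A P Q c : dot n A (fun j => c * P j - Q j) = c * dot n A P - dot n A Q.
Proof. unfold dot; induction n; simpl; [|rewrite IHn]; ring. Qed.
Lemma dot_lin2 n P Q c : dot n (fun j => c * P j - Q j) (fun j => c * P j - Q j) = c*c*dot n P P - 2*c*dot n P Q + dot n Q Q.
Proof. unfold dot; induction n; simpl; [|rewrite IHn]; ring. Qed.

Theorem lemma5 (n : nat) (Hn : (1 <= n)%nat) (Xs : nat -> vset) (X : vset) :
  (forall i, (1 <= i)%nat -> in_Hsconv n (Xs i)) ->
  in_HS n X ->
  hausdorff_converges n Xs X ->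
  forall Q, X Q <-> polar n (polar n X) Q.
Proof.
 intros HXs HX Hconv Q. pose proof HX as [_ [HXsub HXcl]]. split.
 - intros HQ. split; [apply HXsub; auto|]. intros P [HP HPX]. split; [apply HXsub; auto|].
   destruct (HPX Q HQ) as [_ H]. rewrite dot_sym; auto.
 - intros [HQ HQp]. apply NNPP; intro HnQ.
   destruct (max_exists n X Q HX HQ) as [x0 [Hx0 Hmax]].
   pose proof (HXsub _ Hx0) as S0.
   pose proof (dot_bound n Q x0 HQ S0).
   set (c := dot n Q x0) in *.
   destruct (Rle_dec c 0) as [Hc0|Hc0].
   + set (R0 := fun j => - Q j).
     assert (SR : sphere n R0).
     { destruct HQ as [HQ0 HQ1]. split. intros i Hi. unfold R0. rewrite HQ0 by auto. ring.
       unfold R0. rewrite dot_opp, dot_sym, dot_opp, HQ1. ring. }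
     assert (HR : polar n X R0).
     { split; auto. intros P HP. split; auto. unfold R0. rewrite dot_opp, dot_sym.
       pose proof (Hmax P HP). fold c in H0. lra. }
     destruct (HQp R0 HR) as [_ H1]. unfold R0 in H1. rewrite dot_sym, dot_opp in H1.
     destruct HQ as [_ HQ1]. lra.
   + destruct (Req_dec c 1) as [Hc1|Hc1].
     * apply HnQ. apply (HXcl (fun _ => x0)); auto. intros eps Heps. exists 0%nat. intros k _.
       unfold sdist. rewrite dot_sym. fold c. rewrite Hc1, acos_1. lra.
     * set (V := fun j => c * x0 j - Q j).
       assert (HVV : dot n V V = 1 - c*c).
       { unfold V. rewrite dot_lin2. destruct S0 as [_ ->]. destruct HQ as [_ ->]. rewrite dot_sym. fold c. ring. }
       assert (HVp : 0 < dot n V V) by nra.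
       set (R0 := fun j => V j / vnorm n V).
       assert (Hvn : 0 < vnorm n V) by (apply sqrt_lt_R0; auto).
       assert (Hvn2 : vnorm n V * vnorm n V = dot n V V) by (apply sqrt_sqrt; lra).
       assert (SR : sphere n R0).
       { split.
         - intros i Hi. unfold R0, V. destruct S0 as [S00 _]. destruct HQ as [HQ0 _].
           rewrite S00, HQ0 by auto. unfold Rdiv; ring.
         - unfold R0. rewrite dot_div, dot_sym, dot_div. rewrite <- Hvn2. field. lra. }
       assert (HR : polar n X R0).
       { split; auto. intros P HP. split; auto. unfold R0. rewrite dot_div.
         unfold V. rewrite dot_lin. 
         pose proof (variational n Xs X Q x0 P HXs HX Hconv HQ Hx0 Hmax ltac:(fold c; lra) HP).
         fold c in H0. rewrite (dot_sym n P x0), (dot_sym n P Q).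
         apply Rle_ge. unfold Rdiv. apply Rmult_le_pos; [lra|]. left; apply Rinv_0_lt_compat; auto. }
       destruct (HQp R0 HR) as [_ H1]. unfold R0 in H1. rewrite dot_sym, dot_div in H1.
       unfold V in H1. rewrite dot_lin in H1. fold c in H1. destruct HQ as [_ HQ1]. rewrite HQ1 in H1.
       assert (c*c - 1 < 0) by nra.
       assert ((c*c-1) / vnorm n V < 0).
       { unfold Rdiv. pose proof (Rinv_0_lt_compat _ Hvn). nra. }
       change (fun j : nat => c * x0 j - Q j) with V in H1. lra.
Qed.
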